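(* Consider the binary SNR model with users $k\in\mathcal{K}$, resource blocks $r\in\mathcal{R}$, a 0/1 matrix $(\delta_r^k)$, positive integers $d_k$, and all utilities $w^k=1$. Let $d=\max_{k\in\mathcal{K}}d_k$. The GREEDY algorithm processes users in decreasing order of utility (ties broken randomly); when processing user $k$, if at least $d_k$ resource blocks that are active for $k$ ($\delta_r^k=1$) are still unassigned, it assigns $d_k$ of them, chosen at random, to user $k$ and admits $k$; otherwise user $k$ is rejected and assigned nothing. Then the number of users admitted by GREEDY is at least $\frac{1}{d+1}$ times the optimal value of $\max\sum_k z^k$ over $x_r^k\in\{0,1\}$, $z^k\in\{0,1\}$ subject to $\sum_k x_r^k\le1$ for every $r$, $\sum_r x_r^k\ge d_k z^k$ for every $k$, and $x_r^k\le\delta_r^k$ for all $(r,k)$.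
   Context: $x_r^k=1$ means resource block $r$ is assigned to user $k$; $\delta_r^k=1$ means block $r$ is active for user $k$; $z^k=1$ means user $k$ is admitted, which requires at least $d_k$ assigned active blocks; each block goes to at most one user. *)

(* Defs.v *)
From mathcomp Require Import all_boot.
Set Implicit Arguments. Unset Strict Implicit. Unset Printing Implicit Defensive.

(* Binary SNR model: users K, resource blocks R (finite types),
   delta k r = true iff block r is active for user k, demands dk k > 0.
   All utilities w^k = 1. *)

Section SNR.
Variables (K R : finType) (delta : K -> R -> bool) (dk : K -> nat).

Definition dmax : nat := \max_(k : K) dk k.

Definition feasible (x : {ffun K -> {ffun R -> bool}}) (z : {ffun K -> bool}) : bool :=
  [&& [forall r : R, \sum_(k : K) (x k r : nat) <= 1],
      [forall k : K, dk k * z k <= \sum_(r : R) (x k r : nat)] &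
      [forall k : K, forall r : R, x k r ==> delta k r]].

Definition opt_value : nat :=
  \max_(xz : {ffun K -> {ffun R -> bool}} * {ffun K -> bool} | feasible xz.1 xz.2)
     \sum_(k : K) (xz.2 k : nat).

(* A run of GREEDY: users are processed in the order [s] (a permutation of
   all users; since all utilities are equal, any order may arise from the
   random tie-breaking).  [A k] is the set of blocks assigned to user k and
   [z k] whether k is admitted. *)
Definition earlier (s : seq K) (j k : K) : bool := index j s < index k s.

Definition avail (s : seq K) (A : K -> {set R}) (k : K) : {set R} :=
  [set r | delta k r & [forall j : K, earlier s j k ==> (r \notin A j)]].

Definition greedy_run (s : seq K) (A : K -> {set R}) (z : K -> bool) : Prop :=
  perm_eq s (enum K) /\
  forall k : K,
    if dk k <= #|avail s A k|
    then [/\ z k = true, A k \subset avail s A k & #|A k| = dk k]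
    else z k = false /\ A k = set0.

Definition n_admitted (z : K -> bool) : nat := #|[set k : K | z k]|.

End SNR.

(* Main.v *)
Require Import Defs.
From mathcomp Require Import all_boot.

Lemma sum_bool_card (T : finType) (P : pred T) : \sum_(i : T) (P i : nat) = #|P|.
Proof. by rewrite -sum1_card [RHS]big_mkcond /=; apply: eq_bigr => i _; rewrite unfold_in; case: (P i). Qed.

Lemma key (K R : finType) (delta : K -> R -> bool) (dk : K -> nat)
  (s : seq K) (A : K -> {set R}) (z : K -> bool)
  (hrun : greedy_run delta dk s A z)
  (x : {ffun K -> {ffun R -> bool}}) (zo : {ffun K -> bool})
  (hf : feasible delta dk x zo) :
  \sum_(k : K) (zo k : nat) <= (dmax dk).+1 * n_admitted z.
Proof.
case: hrun => _ hrun.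
case/and3P: hf => /forallP h1 /forallP h2 /forallP h3.
have hZ : forall j r, r \in A j -> z j.
  move=> j r; have := hrun j; case: ifP => _; first by case.
  by case=> _ ->; rewrite inE.
have pt : forall k, (zo k : nat) <= z k + (zo k && ~~ z k) by move=> k; case: (zo k); case: (z k).
apply: leq_trans; first by apply: leq_sum => k _; exact: pt k.
rewrite big_split /= mulSn.
have -> : \sum_(k : K) (z k : nat) = n_admitted z.
  rewrite /n_admitted sum_bool_card; apply: eq_card => k; by rewrite inE.
rewrite leq_add2l.
apply: (@leq_trans (\sum_(k : K) \sum_(j | z j) \sum_(r in A j) (x k r : nat))).
  apply: leq_sum => k _.
  case: (boolP (zo k)) => // hzo; case: (boolP (z k)) => //= hzk.
  rewrite lt0n; apply/negP => /eqP/eqP.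
  rewrite sum_nat_eq0 => /forallP H.
  have hsub : [set r | x k r] \subset avail delta s A k.
    apply/subsetP => r; rewrite !inE => hx.
    have := h3 k => /forallP /(_ r); rewrite hx /= => ->.
    apply/forallP => j; apply/implyP => _; apply/negP => hr.
    have hzj := hZ j r hr.
    have := H j; rewrite hzj /= => /eqP /eqP; rewrite sum_nat_eq0 => /forallP /(_ r).
    by rewrite hr hx.
  have hd : dk k <= #|avail delta s A k|.
    apply: (leq_trans _ (subset_leq_card hsub)).
    have := h2 k; rewrite hzo muln1.
    rewrite sum_bool_card => hh; apply: (leq_trans hh).
    by rewrite leq_eqVlt; apply/orP; left; apply/eqP; apply: eq_card => r; rewrite inE.
  have := hrun k; rewrite hd; case=> hz _ _.
  by move: hzk; rewrite hz.
rewrite exchange_big /=.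
apply: (@leq_trans (\sum_(j | z j) \sum_(r in A j) 1)).
  apply: leq_sum => j _; rewrite exchange_big /=; apply: leq_sum => r _.
  by have := h1 r.
apply: (@leq_trans (\sum_(j | z j) dmax dk)).
  apply: leq_sum => j hj; rewrite sum1_card.
  have := hrun j; case: ifP => _; last by case=> hh; rewrite hh in hj.
  case=> _ _ ->; exact: (leq_bigmax j).
rewrite sum_nat_const mulnC leq_mul2l; apply/orP; right.
by rewrite /n_admitted; apply: subset_leq_card; apply/subsetP => k; rewrite !inE.
Qed.

Theorem proposition2 (K R : finType) (delta : K -> R -> bool) (dk : K -> nat)
  (hdk : forall k : K, 0 < dk k)
  (s : seq K) (A : K -> {set R}) (z : K -> bool)
  (hrun : greedy_run delta dk s A z) :
  opt_value delta dk <= (dmax dk).+1 * n_admitted z.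
Proof.
apply/bigmax_leqP => xz hf; exact: (@key _ _ _ _ _ _ _ hrun _ _ hf).
Qed.
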